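(* Let $p:\tilde{Q}\to Q$ be a covering of finite quandles, and let $\Lambda$ be a subgroup of the deck transformation group $\mathrm{Aut}(p)$ that acts freely and transitively on each fiber $p^{-1}(q)$, $q\in Q$. Then there is a function $\phi:Q\times Q\to\Lambda$ such that $\Lambda\times_\phi Q$ is a quandle isomorphic to $\tilde{Q}$.
   Context: A quandle is a set with operation $*$ satisfying $a*a=a$; unique right division; $(a*b)*c=(a*c)*(b*c)$. $R_a(y)=y*a$. A covering is a quandle epimorphism $p:\tilde Q\to Q$ such that $p(y_1)=p(y_2)$ implies $R_{y_1}=R_{y_2}$. Its deck transformation group $\mathrm{Aut}(p)$ is the group of quandle automorphisms $\lambda$ of $\tilde{Q}$ with $p\circ\lambda=p$. For a (not necessarily abelian) group $\Lambda$ and a function $\phi:Q\times Q\to\Lambda$, $\Lambda\times_\phi Q$ denotes the set $\Lambda\times Q$ with $(\lambda,a)*(\mu,b)=(\lambda\phi(a,b),a*b)$. *)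

(* Defs.v *)
From mathcomp Require Import all_boot all_fingroup.
Set Implicit Arguments. Unset Strict Implicit. Unset Printing Implicit Defensive.

Definition is_quandle (T : Type) (op : T -> T -> T) : Prop :=
  [/\ forall a, op a a = a,
      forall a, bijective (fun y => op y a)
    & forall a b c, op (op a b) c = op (op a c) (op b c)].

Definition quandle_hom (T U : Type) (opT : T -> T -> T) (opU : U -> U -> U)
  (f : T -> U) : Prop := forall x y, f (opT x y) = opU (f x) (f y).

Definition covering (T U : Type) (opT : T -> T -> T) (opU : U -> U -> U)
  (p : T -> U) : Prop :=
  [/\ quandle_hom opT opU p,
      forall u, exists t, p t = u
    & forall y1 y2, p y1 = p y2 -> forall z, opT z y1 = opT z y2].

(* Deck transformation: a quandle automorphism l of the total space with
   p \o l = p.  Elements of {perm T} are automatically bijective. *)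
Definition deck_transformation (T U : finType) (opT : T -> T -> T)
  (p : T -> U) (l : {perm T}) : Prop :=
  quandle_hom opT opT l /\ forall x, p (l x) = p x.

Definition ext_op (G : finGroupType) (U : Type) (opU : U -> U -> U)
  (phi : U -> U -> G) (x y : G * U) : G * U :=
  ((x.1 * phi x.2 y.2)%g, opU x.2 y.2).

(* Main.v *)
Require Import Defs.
From mathcomp Require Import all_boot all_fingroup.

Lemma transfer_quandle (A B : Type) (opA : A -> A -> A) (opB : B -> B -> B)
  (f : A -> B) : is_quandle opA -> bijective f -> quandle_hom opA opB f ->
  is_quandle opB.
Proof.
move=> [H1 H2 H3] [g fK gK] hom.
have E : forall u v, opB u v = f (opA (g u) (g v)).
  by move=> u v; rewrite hom !gK.
split.
- by move=> a; rewrite E H1 gK.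
- move=> a.
  have Hb : bijective (f \o (fun y => opA y (g a)) \o g).
    apply: bij_comp; last by exists f.
    by apply: bij_comp; [exists g|apply: H2].
  by apply: (eq_bij Hb) => y /=; rewrite E.
- by move=> a b c; rewrite !E !fK H3.
Qed.

Theorem mainTheorem10 (QT Q : finType) (opT : QT -> QT -> QT) (opQ : Q -> Q -> Q)
  (p : QT -> Q) (Lam : {group {perm QT}}) :
  is_quandle opT -> is_quandle opQ ->
  covering opT opQ p ->
  (forall l, l \in Lam -> deck_transformation opT p l) ->
  (* Lam acts transitively on each fiber *)
  (forall y1 y2, p y1 = p y2 -> exists2 l, l \in Lam & l y1 = y2) ->
  (* Lam acts freely *)
  (forall l y, l \in Lam -> l y = y -> l = 1%g) ->
  exists phi : Q -> Q -> subg_of Lam,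
    is_quandle (ext_op opQ phi) /\
    exists f : QT -> subg_of Lam * Q,
      bijective f /\ quandle_hom opT (ext_op opQ phi) f.
Proof.
move=> qT qQ [hom surj cov] deck trans free.
have sex : forall u, exists t, p t == u.
  by move=> u; case: (surj u) => t <-; exists t.
pose s u := xchoose (sex u).
have ps : forall u, p (s u) = u by move=> u; apply/eqP/(xchooseP (sex u)).
have ex : forall y z, p y = p z -> exists l : subg_of Lam, sgval l y == z.
  move=> y z pyz; case: (trans y z pyz) => l lL lyz.
  by exists (subg Lam l); rewrite subgK // lyz.
have uniq : forall (l m : subg_of Lam) y, sgval l y = sgval m y -> l = m.
  move=> l m y lm; apply: subg_inj.
  have inL : (sgval l * (sgval m)^-1)%g \in Lam by rewrite groupM ?groupV ?subgP.
  have := free _ y inL; rewrite permM lm permK => /(_ erefl) /eqP.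
  by rewrite mulg_eq1 invgK => /eqP.
pose pk y z := odflt 1%g [pick l : subg_of Lam | sgval l y == z].
have pkP : forall y z, p y = p z -> sgval (pk y z) y = z.
  move=> y z pyz; rewrite /pk; case: pickP => [l /eqP //|].
  by case: (ex y z pyz) => l hl /(_ l); rewrite hl.
have deckp : forall (l : subg_of Lam) y, p (sgval l y) = p y.
  by move=> l y; case: (deck _ (subgP l)).
have deckh : forall (l : subg_of Lam) x y, sgval l (opT x y) = opT (sgval l x) (sgval l y).
  by move=> l; case: (deck _ (subgP l)).
pose phi a b := pk (opT (s a) (s b)) (s (opQ a b)).
pose f y := (pk y (s (p y)), p y).
have fhom : quandle_hom opT (ext_op opQ phi) f.
  move=> x y; rewrite /f /ext_op /= hom; congr (_, _).
  apply: (uniq _ _ (opT x y)).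
  rewrite pkP; last by rewrite ps hom.
  rewrite sgvalM ?inE // permM deckh pkP ?ps //.
  rewrite (cov _ (s (p y))); last by rewrite deckp ps.
  by rewrite pkP; rewrite ?hom ?ps.
exists phi; split; last first.
  exists f; split; last exact: fhom.
  exists (fun z => ((sgval z.1)^-1%g : {perm QT}) (s z.2)).
  - by move=> y; rewrite /f /= -{2}(pkP y (s (p y))) ?ps // permK.
  - move=> [l u]; rewrite /f /=.
    have pu : p ((sgval l)^-1%g (s u)) = u.
      by case: (deck _ (groupVr (subgP l))) => _ ->; rewrite ps.
    rewrite pu; congr (_, _); apply: (uniq _ _ ((sgval l)^-1%g (s u))).
    by rewrite pkP ?pu ?ps // permKV.
apply: transfer_quandle qT _ fhom.
exists (fun z => ((sgval z.1)^-1%g : {perm QT}) (s z.2)).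
- by move=> y; rewrite /f /= -{2}(pkP y (s (p y))) ?ps // permK.
- move=> [l u]; rewrite /f /=.
  have pu : p ((sgval l)^-1%g (s u)) = u.
    by case: (deck _ (groupVr (subgP l))) => _ ->; rewrite ps.
  rewrite pu; congr (_, _); apply: (uniq _ _ ((sgval l)^-1%g (s u))).
  by rewrite pkP ?pu ?ps // permKV.
Qed.
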